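(* The fixed points of the map $T_1$ (i.e. $F\in\Gamma_0(\mathbb{R}_+)$ with $T_1(F)=F$) are exactly the functions $F(s)=c|s-1|$ with $c\in[0,+\infty]$, where for $c=+\infty$ this means $F=I_{\{1\}}$ ($F(1)=0$, $F(s)=+\infty$ for $s\neq1$). Moreover, for $G\in\Gamma_0(\mathbb{R}_+)$, the marginal perspective function $H_G$ is a metric on $[0,+\infty)$ if and only if there is $c\in(0,+\infty)$ with $H_G(r,t)=c|r-t|$ for all $r,t\ge0$.
   Context: $\Gamma_0(\mathbb{R}_+)$ is the set of functions $F:[0,\infty)\to[0,\infty]$ that are convex, lower semicontinuous, with $F(1)=0$. For $F\in\Gamma_0(\mathbb{R}_+)$: $\mathrm{rec}(F)(r)=\lim_{\alpha\to\infty}F(1+\alpha r)/\alpha$; the perspective function is $\hat F(r,t)=tF(r/t)$ for $t>0$, $\hat F(r,0)=\mathrm{rec}(F)(r)$. The marginal perspective function $H_F$ is the lower semicontinuous envelope of $\tilde H_F(r_1,r_2)=\inf_{\theta>0}[\hat F(\theta,r_1)+\hat F(\theta,r_2)]$; it is symmetric, jointly convex, positively $1$-homogeneous and vanishes on the diagonal. $T_1(F)(s)=H_F(1,s)$. A metric on $[0,\infty)$ is a function $D:[0,\infty)^2\to[0,\infty)$ with $D(x,y)=0\iff x=y$, symmetric, satisfying the triangle inequality. *)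

(* Defs.v *)
From Stdlib Require Import Reals Lra ClassicalEpsilon.
Open Scope R_scope.

(* Extended reals with a top element +oo; used for values in [0, +oo]. *)
Inductive ER : Type := Fin (x : R) | PInf.

Definition leE (a b : ER) : Prop :=
  match a, b with
  | Fin x, Fin y => x <= y
  | _, PInf => True
  | PInf, Fin _ => False
  end.

Definition ltE (a b : ER) : Prop :=
  match a, b with
  | Fin x, Fin y => x < y
  | Fin _, PInf => True
  | PInf, _ => False
  end.

Definition addE (a b : ER) : ER :=
  match a, b with
  | Fin x, Fin y => Fin (x + y)
  | _, _ => PInf
  end.

Definition scalE (t : R) (a : ER) : ER :=
  match a with
  | Fin x => Fin (t * x)
  | PInf => PInf
  end.

Definition is_lubE (P : ER -> Prop) (s : ER) : Prop :=
  (forall x, P x -> leE x s) /\ (forall b, (forall x, P x -> leE x b) -> leE s b).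
Definition is_glbE (P : ER -> Prop) (s : ER) : Prop :=
  (forall x, P x -> leE s x) /\ (forall b, (forall x, P x -> leE b x) -> leE b s).

Definition supE (P : ER -> Prop) : ER := epsilon (inhabits PInf) (is_lubE P).
Definition infE (P : ER -> Prop) : ER := epsilon (inhabits PInf) (is_glbE P).

(* Functions on [0,+oo) are modelled as R -> ER; only values on [0,+oo) matter. *)

Definition convex_on_Rplus (F : R -> ER) : Prop :=
  forall x y l, 0 <= x -> 0 <= y -> 0 < l < 1 ->
    leE (F (l * x + (1 - l) * y)) (addE (scalE l (F x)) (scalE (1 - l) (F y))).

Definition lsc_on_Rplus (F : R -> ER) : Prop :=
  forall x a, 0 <= x -> ltE (Fin a) (F x) ->
    exists d, 0 < d /\ forall y, 0 <= y -> Rabs (y - x) < d -> ltE (Fin a) (F y).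

Definition Gamma0 (F : R -> ER) : Prop :=
  (forall x, 0 <= x -> leE (Fin 0) (F x)) /\
  convex_on_Rplus F /\ lsc_on_Rplus F /\ F 1 = Fin 0.

(* recession function: rec(F)(r) = lim_{a->oo} F(1+a r)/a, written as the
   (standard, equal for F in Gamma0) supremum over a > 0 of (F(1+a r)-F(1))/a *)
Definition recF (F : R -> ER) (r : R) : ER :=
  supE (fun v => exists a, 0 < a /\ v = scalE (/ a) (F (1 + a * r))).

Definition persp (F : R -> ER) (r t : R) : ER :=
  if Rlt_dec 0 t then scalE t (F (r / t)) else recF F r.

Definition tildeH (F : R -> ER) (r1 r2 : R) : ER :=
  infE (fun v => exists th, 0 < th /\ v = addE (persp F th r1) (persp F th r2)).

Definition lsc2_on_Rplus (g : R -> R -> ER) : Prop :=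
  forall x1 x2 a, 0 <= x1 -> 0 <= x2 -> ltE (Fin a) (g x1 x2) ->
    exists d, 0 < d /\ forall y1 y2, 0 <= y1 -> 0 <= y2 ->
      Rabs (y1 - x1) < d -> Rabs (y2 - x2) < d -> ltE (Fin a) (g y1 y2).

Definition lsc_envelope (h : R -> R -> ER) (r1 r2 : R) : ER :=
  supE (fun v => exists g : R -> R -> ER,
          lsc2_on_Rplus g /\
          (forall y1 y2, 0 <= y1 -> 0 <= y2 -> leE (g y1 y2) (h y1 y2)) /\
          v = g r1 r2).

Definition HF (F : R -> ER) : R -> R -> ER := lsc_envelope (tildeH F).

Definition T1 (F : R -> ER) (s : R) : ER := HF F 1 s.

Definition is_metric_Rplus (D : R -> R -> ER) : Prop :=
  (forall x y, 0 <= x -> 0 <= y -> exists d, 0 <= d /\ D x y = Fin d) /\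
  (forall x y, 0 <= x -> 0 <= y -> (D x y = Fin 0 <-> x = y)) /\
  (forall x y, 0 <= x -> 0 <= y -> D x y = D y x) /\
  (forall x y z, 0 <= x -> 0 <= y -> 0 <= z -> leE (D x z) (addE (D x y) (D y z))).

(* Main.v *)
Require Import Defs.
From Stdlib Require Import Reals.
From Stdlib Require Import Lra ClassicalEpsilon Classical.
Open Scope R_scope.

Lemma leE_refl a : leE a a.
Proof. destruct a; simpl; auto; lra. Qed.
Lemma leE_trans a b c : leE a b -> leE b c -> leE a c.
Proof. destruct a, b, c; simpl; intros; auto; try lra; tauto. Qed.
Lemma leE_antisym a b : leE a b -> leE b a -> a = b.
Proof. destruct a, b; simpl; intros; try tauto. f_equal; lra. Qed.
Lemma not_leE a b : ~ leE a b -> ltE b a.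
Proof. destruct a, b; simpl; intros; auto; try lra; tauto. Qed.
Lemma ltE_leE a b : ltE a b -> leE b a -> False.
Proof. destruct a, b; simpl; intros; auto; try lra. Qed.
Lemma addE_mono a b c d : leE a b -> leE c d -> leE (addE a c) (addE b d).
Proof. destruct a, b, c, d; simpl; intros; auto; try lra. Qed.
Lemma scalE_mono t a b : 0 <= t -> leE a b -> leE (scalE t a) (scalE t b).
Proof. destruct a, b; simpl; intros; auto. apply Rmult_le_compat_l; auto. Qed.
Lemma scalE_scalE t u a : scalE t (scalE u a) = scalE (t*u) a.
Proof. destruct a; simpl; auto. f_equal; ring. Qed.
Lemma scalE_addE t a b : scalE t (addE a b) = addE (scalE t a) (scalE t b).
Proof. destruct a, b; simpl; auto. f_equal; ring. Qed.
Lemma scalE_1 a : scalE 1 a = a.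
Proof. destruct a; simpl; auto. f_equal; ring. Qed.
Lemma addE_0l a : addE (Fin 0) a = a.
Proof. destruct a; simpl; auto. f_equal; ring. Qed.
Lemma addE_0r a : addE a (Fin 0) = a.
Proof. destruct a; simpl; auto. f_equal; ring. Qed.
Lemma scalE_0 t : scalE t (Fin 0) = Fin 0.
Proof. simpl. f_equal; ring. Qed.
Lemma addE_nonneg a b : leE (Fin 0) a -> leE (Fin 0) b -> leE (Fin 0) (addE a b).
Proof. destruct a, b; simpl; intros; auto; lra. Qed.
Lemma scalE_nonneg t a : 0 <= t -> leE (Fin 0) a -> leE (Fin 0) (scalE t a).
Proof. destruct a; simpl; intros; auto. apply Rmult_le_pos; auto. Qed.

Lemma supE_spec P : (exists x, P x) -> is_lubE P (supE P).
Proof.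
  intros Hne. unfold supE. apply epsilon_spec.
  destruct (classic (P PInf)) as [HP|HP].
  - exists PInf. split.
    + intros x _. destruct x; exact I.
    + intros b Hb. exact (Hb PInf HP).
  - destruct (classic (bound (fun r => P (Fin r)))) as [Hb|Hb].
    + assert (HE : exists r, P (Fin r)).
      { destruct Hne as [x Hx]. destruct x as [r|]; [exists r; auto| tauto]. }
      destruct (completeness _ Hb HE) as [m [Hm1 Hm2]].
      exists (Fin m). split.
      * intros x Hx. destruct x as [r|]; [simpl; apply Hm1; auto| tauto].
      * intros b Hub. destruct b as [y|]; simpl; auto.
        apply Hm2. intros r Hr. exact (Hub (Fin r) Hr).
    + exists PInf. split.
      * intros x _. destruct x; exact I.
      * intros b Hub. destruct b as [y|]; simpl; auto.
        apply Hb. exists y. intros r Hr. exact (Hub (Fin r) Hr).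
Qed.

Lemma sup_ge P x : P x -> leE x (supE P).
Proof. intros Hx. destruct (supE_spec P (ex_intro _ x Hx)) as [H _]. auto. Qed.
Lemma sup_le P b : (exists x, P x) -> (forall x, P x -> leE x b) -> leE (supE P) b.
Proof. intros Hne H. destruct (supE_spec P Hne) as [_ H2]. auto. Qed.



Lemma infE_spec P : (forall x, P x -> leE (Fin 0) x) -> is_glbE P (infE P).
Proof.
  intros Hnn. unfold infE. apply epsilon_spec.
  destruct (classic (exists r, P (Fin r))) as [[r0 Hr0]|Hno].
  - set (E := fun r => P (Fin (- r))).
    assert (Hb : bound E).
    { exists 0. intros r Hr. specialize (Hnn _ Hr). simpl in Hnn. lra. }
    assert (HE : exists r, E r).
    { exists (- r0). unfold E. rewrite Ropp_involutive. auto. }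
    destruct (completeness _ Hb HE) as [m [Hm1 Hm2]].
    exists (Fin (- m)). split.
    + intros x Hx. destruct x as [r|]; simpl; auto.
      assert (E (- r)) by (unfold E; rewrite Ropp_involutive; auto).
      specialize (Hm1 _ H). lra.
    + intros b Hlb. destruct b as [y|]; simpl.
      * assert (m <= - y); [|lra]. apply Hm2. intros r Hr.
        specialize (Hlb _ Hr). simpl in Hlb. lra.
      * exact (Hlb _ Hr0).
  - exists PInf. split.
    + intros x Hx. destruct x as [r|]; simpl; auto. apply Hno; eauto.
    + intros b _. destruct b; exact I.
Qed.

Lemma inf_le P x : (forall x, P x -> leE (Fin 0) x) -> P x -> leE (infE P) x.
Proof. intros Hn Hx. destruct (infE_spec P Hn) as [H _]. auto. Qed.
Lemma inf_ge P b : (forall x, P x -> leE (Fin 0) x) -> (forall x, P x -> leE b x) -> leE b (infE P).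
Proof. intros Hn H. destruct (infE_spec P Hn) as [_ H2]. auto. Qed.
Lemma recF_ge F r a : 0 < a -> leE (scalE (/ a) (F (1 + a * r))) (recF F r).
Proof. intros Ha. unfold recF. apply sup_ge. exists a; auto. Qed.
Lemma recF_le F r b : (forall a, 0 < a -> leE (scalE (/ a) (F (1 + a * r))) b) -> leE (recF F r) b.
Proof.
  intros H. unfold recF. apply sup_le.
  - exists (scalE (/1) (F (1 + 1 * r))). exists 1; split; auto; lra.
  - intros x [a [Ha ->]]. auto.
Qed.

Lemma persp_pos F th r : 0 < r -> persp F th r = scalE r (F (th / r)).
Proof. intros Hr. unfold persp. destruct (Rlt_dec 0 r); [auto|lra]. Qed.
Lemma persp_0 F th : persp F th 0 = recF F th.
Proof. unfold persp. destruct (Rlt_dec 0 0); [lra|auto]. Qed.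

Lemma persp_nonneg F th r : Gamma0 F -> 0 < th -> leE (Fin 0) (persp F th r).
Proof.
  intros [Hn _] Hth. unfold persp. destruct (Rlt_dec 0 r) as [Hr|Hr].
  - apply scalE_nonneg; [lra|]. apply Hn. apply Rlt_le, Rdiv_lt_0_compat; auto.
  - eapply leE_trans; [|apply (recF_ge F th 1); lra].
    apply scalE_nonneg; [apply Rlt_le, Rinv_0_lt_compat; lra|]. apply Hn. nra.
Qed.

Lemma tildeH_nn F r1 r2 : Gamma0 F -> forall x,
  (exists th, 0 < th /\ x = addE (persp F th r1) (persp F th r2)) -> leE (Fin 0) x.
Proof. intros HG0 x [th [Hth ->]]. apply addE_nonneg; apply persp_nonneg; auto. Qed.

Lemma tildeH_le F r1 r2 th : Gamma0 F -> 0 < th ->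
  leE (tildeH F r1 r2) (addE (persp F th r1) (persp F th r2)).
Proof. intros HG0 Hth. unfold tildeH. apply inf_le. apply tildeH_nn; auto. exists th; auto. Qed.
Lemma tildeH_ge F r1 r2 b : Gamma0 F ->
  (forall th, 0 < th -> leE b (addE (persp F th r1) (persp F th r2))) -> leE b (tildeH F r1 r2).
Proof. intros HG0 H. unfold tildeH. apply inf_ge. apply tildeH_nn; auto.
  intros x [th [Hth ->]]. auto. Qed.
Lemma tildeH_nonneg F r1 r2 : Gamma0 F -> leE (Fin 0) (tildeH F r1 r2).
Proof. intros HG0. apply tildeH_ge; auto. intros th Hth. apply addE_nonneg; apply persp_nonneg; auto. Qed.

Definition lscmin F (g : R -> R -> ER) := lsc2_on_Rplus g /\
  forall y1 y2, 0 <= y1 -> 0 <= y2 -> leE (g y1 y2) (tildeH F y1 y2).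

Lemma zero_lscmin F : Gamma0 F -> lscmin F (fun _ _ => Fin 0).
Proof.
  intros HG0. split.
  - intros x1 x2 a _ _ Ha. exists 1. split; [lra|]. auto.
  - intros. apply tildeH_nonneg; auto.
Qed.

Lemma HF_ge F g p1 p2 : lscmin F g -> leE (g p1 p2) (HF F p1 p2).
Proof. intros [H1 H2]. unfold HF, lsc_envelope. apply sup_ge. exists g; auto. Qed.

Lemma HF_nonneg F p1 p2 : Gamma0 F -> leE (Fin 0) (HF F p1 p2).
Proof. intros HG0. apply (HF_ge F (fun _ _ => Fin 0)). apply zero_lscmin; auto. Qed.

Lemma HF_le F p1 p2 : Gamma0 F -> 0 <= p1 -> 0 <= p2 -> leE (HF F p1 p2) (tildeH F p1 p2).
Proof.
  intros HG0 H1 H2. unfold HF, lsc_envelope. apply sup_le.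
  - exists (Fin 0). exists (fun _ _ => Fin 0). destruct (zero_lscmin F HG0). auto.
  - intros x [g [Hg [Hm ->]]]. auto.
Qed.

Lemma HF_UB F p1 p2 b : Gamma0 F ->
  (forall d e, 0 < d -> 0 < e -> exists y1 y2 th, 0 <= y1 /\ 0 <= y2 /\
     Rabs (y1 - p1) < d /\ Rabs (y2 - p2) < d /\ 0 < th /\
     leE (addE (persp F th y1) (persp F th y2)) (Fin (b + e))) ->
  0 <= p1 -> 0 <= p2 -> leE (HF F p1 p2) (Fin b).
Proof.
  intros HG0 H Hp1 Hp2. unfold HF, lsc_envelope. apply sup_le.
  - exists (Fin 0). exists (fun _ _ => Fin 0). destruct (zero_lscmin F HG0). auto.
  - intros x [g [Hg [Hm ->]]].
    apply NNPP. intros Hno. apply not_leE in Hno.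
    assert (Ha : exists a, b < a /\ ltE (Fin a) (g p1 p2)).
    { destruct (g p1 p2) as [v|] eqn:E; simpl in Hno.
      - exists ((b + v) / 2). simpl. split; lra.
      - exists (b + 1). simpl. split; [lra|auto]. }
    destruct Ha as [a [Hab Ha]].
    destruct (Hg p1 p2 a Hp1 Hp2 Ha) as [d [Hd Hnear]].
    destruct (H d (a - b) Hd ltac:(lra)) as [y1 [y2 [th [Hy1 [Hy2 [Hd1 [Hd2 [Hth Hle]]]]]]]].
    specialize (Hnear y1 y2 Hy1 Hy2 Hd1 Hd2).
    assert (leE (g y1 y2) (Fin a)).
    { eapply leE_trans; [apply Hm; auto|].
      eapply leE_trans; [apply tildeH_le; eauto|].
      replace a with (b + (a - b)) by ring. auto. }
    eapply ltE_leE; eauto.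
Qed.
Lemma ltE_le a b : ltE a b -> leE a b.
Proof. destruct a, b; simpl; auto; lra. Qed.

Lemma Rabs_tri3 y x p : Rabs (y - p) <= Rabs (y - x) + Rabs (x - p).
Proof. replace (y - p) with ((y - x) + (x - p)) by ring. apply Rabs_triang. Qed.

Lemma HF_APX F p1 p2 b : Gamma0 F -> 0 <= p1 -> 0 <= p2 -> HF F p1 p2 = Fin b ->
  forall d e, 0 < d -> 0 < e -> exists y1 y2 th, 0 <= y1 /\ 0 <= y2 /\
     Rabs (y1 - p1) < d /\ Rabs (y2 - p2) < d /\ 0 < th /\
     leE (addE (persp F th y1) (persp F th y2)) (Fin (b + e)).
Proof.
  intros HG0 Hp1 Hp2 Hb d e Hd He. apply NNPP. intros Hno.
  assert (Hb0 : 0 <= b).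
  { pose proof (HF_nonneg F p1 p2 HG0) as H. rewrite Hb in H. exact H. }
  set (g := fun y1 y2 => if Rlt_dec (Rabs (y1 - p1)) d then
                         if Rlt_dec (Rabs (y2 - p2)) d then Fin (b + e) else Fin 0 else Fin 0).
  assert (Hg : lscmin F g).
  { split.
    - intros x1 x2 a Hx1 Hx2 Ha. unfold g in Ha.
      destruct (Rlt_dec (Rabs (x1 - p1)) d) as [h1|h1];
      [destruct (Rlt_dec (Rabs (x2 - p2)) d) as [h2|h2]|].
      + exists (Rmin (d - Rabs (x1 - p1)) (d - Rabs (x2 - p2))). split.
        { apply Rmin_glb_lt; lra. }
        intros y1 y2 _ _ Hy1 Hy2. unfold g.
        pose proof (Rmin_l (d - Rabs (x1 - p1)) (d - Rabs (x2 - p2))).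
        pose proof (Rmin_r (d - Rabs (x1 - p1)) (d - Rabs (x2 - p2))).
        pose proof (Rabs_tri3 y1 x1 p1). pose proof (Rabs_tri3 y2 x2 p2).
        destruct (Rlt_dec (Rabs (y1 - p1)) d); [|lra].
        destruct (Rlt_dec (Rabs (y2 - p2)) d); [|lra]. exact Ha.
      + simpl in Ha. exists 1. split; [lra|]. intros y1 y2 _ _ _ _. unfold g.
        destruct (Rlt_dec (Rabs (y1 - p1)) d); [destruct (Rlt_dec (Rabs (y2 - p2)) d)|]; simpl; lra.
      + simpl in Ha. exists 1. split; [lra|]. intros y1 y2 _ _ _ _. unfold g.
        destruct (Rlt_dec (Rabs (y1 - p1)) d); [destruct (Rlt_dec (Rabs (y2 - p2)) d)|]; simpl; lra.
    - intros y1 y2 Hy1 Hy2. unfold g.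
      destruct (Rlt_dec (Rabs (y1 - p1)) d) as [h1|h1];
      [destruct (Rlt_dec (Rabs (y2 - p2)) d) as [h2|h2]|];
      try (apply tildeH_nonneg; auto).
      apply tildeH_ge; auto. intros th Hth. apply ltE_le, not_leE.
      intros Hle. apply Hno. exists y1, y2, th. repeat split; auto. }
  pose proof (HF_ge F g p1 p2 Hg) as H. rewrite Hb in H. unfold g in H.
  rewrite !Rminus_diag, !Rabs_R0 in H.
  destruct (Rlt_dec 0 d); [|lra]. simpl in H. lra.
Qed.
Lemma persp_scale G l th y : 0 < l -> 0 < th -> 0 <= y ->
  leE (persp G (l * th) (l * y)) (scalE l (persp G th y)).
Proof.
  intros Hl Hth Hy. destruct (Rle_lt_or_eq_dec 0 y Hy) as [Hy'|Hy'].
  - rewrite !persp_pos by nra. rewrite scalE_scalE.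
    replace (l * th / (l * y)) with (th / y) by (field; lra). apply leE_refl.
  - subst y. rewrite Rmult_0_r, !persp_0. apply recF_le. intros a Ha.
    replace (scalE (/ a) (G (1 + a * (l * th)))) with
      (scalE l (scalE (/ (a * l)) (G (1 + (a * l) * th)))).
    + apply scalE_mono; [lra|]. apply recF_ge. nra.
    + rewrite scalE_scalE. f_equal; [field; lra| f_equal; ring].
Qed.

Lemma persp_trans G x th s : Gamma0 G -> 0 < x -> 0 < th -> 0 <= s ->
  leE (persp G (x + th) (x + s)) (persp G th s).
Proof.
  intros [Hn [Hc [_ H1]]] Hx Hth Hs. rewrite persp_pos by lra.
  destruct (Rle_lt_or_eq_dec 0 s Hs) as [Hs'|Hs'].
  - rewrite persp_pos by lra.
    assert (Hl : 0 < s / (x + s) < 1).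
    { split; [apply Rdiv_lt_0_compat; lra|]. apply Rmult_lt_reg_r with (x + s); [lra|].
      field_simplify; lra. }
    pose proof (Hc (th / s) 1 (s / (x + s)) ltac:(apply Rlt_le, Rdiv_lt_0_compat; lra) ltac:(lra) Hl) as H.
    rewrite H1, scalE_0, addE_0r in H.
    replace (s / (x + s) * (th / s) + (1 - s / (x + s)) * 1) with ((x + th) / (x + s)) in H
      by (field; lra).
    eapply leE_trans; [apply scalE_mono; [lra|exact H]|].
    rewrite scalE_scalE. replace ((x + s) * (s / (x + s))) with s by (field; lra). apply leE_refl.
  - subst s. rewrite persp_0, Rplus_0_r.
    eapply leE_trans; [|apply (recF_ge G th (/ x)); apply Rinv_0_lt_compat; lra].
    rewrite Rinv_inv. replace ((x + th) / x) with (1 + / x * th) by (field; lra). apply leE_refl.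
Qed.

Lemma HF_hom G l p1 p2 b : Gamma0 G -> 0 < l -> 0 <= p1 -> 0 <= p2 -> HF G p1 p2 = Fin b ->
  leE (HF G (l * p1) (l * p2)) (Fin (l * b)).
Proof.
  intros HG0 Hl Hp1 Hp2 Hb. apply HF_UB; [auto| |nra|nra].
  intros d e Hd He.
  destruct (HF_APX G p1 p2 b HG0 Hp1 Hp2 Hb (d / l) (e / l)) as
    [y1 [y2 [th [Hy1 [Hy2 [Hd1 [Hd2 [Hth Hle]]]]]]]];
    try (apply Rdiv_lt_0_compat; lra).
  exists (l * y1), (l * y2), (l * th).
  assert (Hm : forall y p, Rabs (y - p) < d / l -> Rabs (l * y - l * p) < d).
  { intros y p H. replace (l * y - l * p) with (l * (y - p)) by ring.
    rewrite Rabs_mult, (Rabs_pos_eq l) by lra.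
    apply Rlt_le_trans with (l * (d / l)); [apply Rmult_lt_compat_l; auto| right; field; lra]. }
  repeat split; try nra; auto.
  eapply leE_trans; [apply addE_mono; apply persp_scale; auto|].
  rewrite <- scalE_addE. eapply leE_trans; [apply scalE_mono; [lra|exact Hle]|].
  simpl. right. field. lra.
Qed.

Lemma HF_tr G x y1 y2 b : Gamma0 G -> 0 < x -> 0 <= y1 -> 0 <= y2 -> HF G y1 y2 = Fin b ->
  leE (HF G (x + y1) (x + y2)) (Fin b).
Proof.
  intros HG0 Hx Hy1 Hy2 Hb. apply HF_UB; [auto| |lra|lra].
  intros d e Hd He.
  destruct (HF_APX G y1 y2 b HG0 Hy1 Hy2 Hb d e Hd He) as
    [z1 [z2 [th [Hz1 [Hz2 [Hd1 [Hd2 [Hth Hle]]]]]]]].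
  exists (x + z1), (x + z2), (x + th).
  replace (x + z1 - (x + y1)) with (z1 - y1) by ring.
  replace (x + z2 - (x + y2)) with (z2 - y2) by ring.
  repeat split; try lra; auto.
  eapply leE_trans; [apply addE_mono; apply persp_trans; auto|]. exact Hle.
Qed.

Lemma part2 : forall G : R -> ER, Gamma0 G ->
     (is_metric_Rplus (HF G) <->
      exists c, 0 < c /\ forall r t, 0 <= r -> 0 <= t -> HF G r t = Fin (c * Rabs (r - t))).
Proof.
  intros G HG0. split.
  - intros [Hfin [Hz [Hsym Htri]]].
    destruct (Hfin 0 1 ltac:(lra) ltac:(lra)) as [a [Ha0 Ha]].
    assert (Hapos : 0 < a).
    { destruct (Rle_lt_or_eq_dec 0 a Ha0); auto. subst a.
      apply (proj1 (Hz 0 1 ltac:(lra) ltac:(lra))) in Ha. lra. }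
    assert (Hax : forall t, 0 <= t -> HF G 0 t = Fin (a * t)).
    { intros t Ht. destruct (Rle_lt_or_eq_dec 0 t Ht) as [Ht'|Ht'].
      - destruct (Hfin 0 t ltac:(lra) Ht) as [dt [_ Hdt]].
        pose proof (HF_hom G t 0 1 a HG0 Ht' ltac:(lra) ltac:(lra) Ha) as H1.
        rewrite Rmult_0_r, Rmult_1_r, Hdt in H1. simpl in H1.
        pose proof (HF_hom G (/ t) 0 t dt HG0 ltac:(apply Rinv_0_lt_compat; lra)
          ltac:(lra) Ht Hdt) as H2.
        rewrite Rmult_0_r, Rinv_l, Ha in H2 by lra. simpl in H2.
        rewrite Hdt. f_equal.
        assert (t * a <= dt) by (apply Rmult_le_reg_l with (/ t);
          [apply Rinv_0_lt_compat; lra| field_simplify; lra]).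
        lra.
      - subst t. rewrite Rmult_0_r. apply (Hz 0 0); lra. }
    exists a. split; auto.
    assert (Hle : forall r t, 0 <= r -> r <= t -> HF G r t = Fin (a * Rabs (r - t))).
    { intros r t Hr Hrt. rewrite Rabs_left1 by lra.
      destruct (Rle_lt_or_eq_dec 0 r Hr) as [Hr'|Hr'].
      - destruct (Hfin r t Hr ltac:(lra)) as [v [_ Hv]].
        pose proof (HF_tr G r 0 (t - r) (a * (t - r)) HG0 Hr' ltac:(lra) ltac:(lra)
          (Hax (t - r) ltac:(lra))) as H1.
        rewrite Rplus_0_r in H1. replace (r + (t - r)) with t in H1 by ring.
        rewrite Hv in H1. simpl in H1.
        pose proof (Htri 0 r t ltac:(lra) Hr ltac:(lra)) as H2.
        rewrite (Hax t), (Hax r), Hv in H2 by lra. simpl in H2.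
        rewrite Hv. f_equal. lra.
      - subst r. rewrite Hax by lra. f_equal. ring. }
    intros r t Hr Ht. destruct (Rle_dec r t).
    + apply Hle; auto.
    + rewrite Hsym by auto. rewrite Hle by lra. f_equal. f_equal.
      rewrite <- Rabs_Ropp. f_equal. ring.
  - intros [c [Hc H]]. split; [|split; [|split]].
    + intros x y Hx Hy. exists (c * Rabs (x - y)). split; [|auto].
      apply Rmult_le_pos; [lra|apply Rabs_pos].
    + intros x y Hx Hy. split.
      * intros Hxy. rewrite H in Hxy by auto. injection Hxy as Hxy.
        apply Rmult_integral in Hxy. destruct Hxy as [|Hxy]; [lra|].
        destruct (Req_dec x y) as [|Hne]; auto. exfalso. apply (Rabs_no_R0 (x - y)); [lra|auto].
      * intros ->. rewrite H by auto. rewrite Rminus_diag, Rabs_R0, Rmult_0_r. auto.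
    + intros x y Hx Hy. rewrite !H by auto. f_equal. f_equal. rewrite <- Rabs_Ropp. f_equal. ring.
    + intros x y z Hx Hy Hz. rewrite !H by auto. simpl.
      pose proof (Rabs_tri3 x y z). nra.
Qed.
Lemma part1_lin F c : Gamma0 F -> 0 <= c -> (forall s, 0 <= s -> F s = Fin (c * Rabs (s - 1))) ->
  forall s, 0 <= s -> T1 F s = F s.
Proof.
  intros HG0 Hc HFs.
  assert (Hp : forall th y, 0 < th -> 0 <= y -> persp F th y = Fin (c * Rabs (th - y))).
  { intros th y Hth Hy. destruct (Rle_lt_or_eq_dec 0 y Hy) as [Hy'|Hy'].
    - rewrite persp_pos by auto. rewrite HFs by (apply Rlt_le, Rdiv_lt_0_compat; lra).
      simpl. f_equal. replace (th - y) with (y * (th / y - 1)) by (field; lra).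
      rewrite Rabs_mult, (Rabs_pos_eq y) by lra. ring.
    - subst y. rewrite persp_0. apply leE_antisym.
      + apply recF_le. intros a Ha. rewrite HFs by nra.
        replace (1 + a * th - 1) with (a * th) by ring.
        rewrite !Rabs_pos_eq by nra. simpl. right. field. lra.
      + eapply leE_trans; [|apply (recF_ge F th 1); lra].
        rewrite HFs by lra. replace (1 + 1 * th - 1) with th by ring.
        rewrite Rminus_0_r, Rinv_1. simpl. right. ring. }
  intros s Hs. unfold T1. rewrite HFs by auto. apply leE_antisym.
  - eapply leE_trans; [apply HF_le; auto; lra|].
    eapply leE_trans; [apply (tildeH_le F 1 s 1); auto; lra|].
    rewrite !Hp by lra. simpl. rewrite Rminus_diag, Rabs_R0, (Rabs_minus_sym 1 s). lra.
  - rewrite (Rabs_minus_sym s 1).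
    apply (HF_ge F (fun y1 y2 => Fin (c * Rabs (y1 - y2))) 1 s). split.
    + intros x1 x2 a _ _ Ha. simpl in Ha.
      set (D0 := c * Rabs (x1 - x2) - a).
      set (d := D0 / (2 * c + 2)).
      assert (Hd : d * (2 * c + 2) = D0) by (unfold d; field; lra).
      assert (HD0 : 0 < D0) by (unfold D0; lra).
      assert (Hdp : 0 < d) by (unfold d; apply Rdiv_lt_0_compat; lra).
      exists d. split; auto. intros y1 y2 _ _ H1 H2. simpl.
      pose proof (Rabs_tri3 x1 y1 x2). pose proof (Rabs_tri3 y1 y2 x2).
      rewrite (Rabs_minus_sym x1 y1) in *.
      assert (c * Rabs (x1 - x2) <= c * (Rabs (y1 - y2) + 2 * d)).
      { apply Rmult_le_compat_l; lra. }
      assert (c * (Rabs (y1 - y2) + 2 * d) = c * Rabs (y1 - y2) + 2 * (c * d)) by ring.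
      assert (2 * (c * d) + 2 * d = D0) by (rewrite <- Hd; ring).
      unfold D0 in *. lra.
    + intros y1 y2 Hy1 Hy2. apply tildeH_ge; auto. intros th Hth.
      rewrite !Hp by auto. simpl.
      pose proof (Rabs_tri3 y1 th y2). rewrite (Rabs_minus_sym y1 th) in *.
      assert (c * Rabs (y1 - y2) <= c * (Rabs (th - y1) + Rabs (th - y2))) by
        (apply Rmult_le_compat_l; lra). lra.
Qed.

Lemma part1_ind F : Gamma0 F -> (forall s, 0 <= s -> F s = if Req_EM_T s 1 then Fin 0 else PInf) ->
  forall s, 0 <= s -> T1 F s = F s.
Proof.
  intros HG0 HFs.
  assert (Hp : forall th y v, 0 < th -> 0 <= y -> persp F th y = Fin v -> y = th).
  { intros th y v Hth Hy Hv. destruct (Rle_lt_or_eq_dec 0 y Hy) as [Hy'|Hy'].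
    - rewrite persp_pos in Hv by auto.
      rewrite HFs in Hv by (apply Rlt_le, Rdiv_lt_0_compat; lra).
      destruct (Req_EM_T (th / y) 1) as [E|E]; [|discriminate].
      apply (f_equal (fun z => z * y)) in E. field_simplify in E; lra.
    - subst y. rewrite persp_0 in Hv. exfalso.
      pose proof (recF_ge F th 1 ltac:(lra)) as H. rewrite Hv in H.
      rewrite HFs in H by lra. destruct (Req_EM_T (1 + 1 * th) 1); [lra|].
      simpl in H. exact H. }
  assert (H1 : F 1 = Fin 0).
  { rewrite HFs by lra. destruct (Req_EM_T 1 1); [auto|lra]. }
  intros s Hs. unfold T1. rewrite (HFs s Hs). destruct (Req_EM_T s 1) as [E|E].
  - subst s. apply leE_antisym; [|apply HF_nonneg; auto].
    eapply leE_trans; [apply HF_le; auto; lra|].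
    eapply leE_trans; [apply (tildeH_le F 1 1 1); auto; lra|].
    rewrite persp_pos by lra. replace (1 / 1) with 1 by field. rewrite H1. simpl. lra.
  - destruct (HF F 1 s) as [b|] eqn:Hb; auto. exfalso.
    assert (Hd : 0 < Rabs (1 - s) / 2).
    { apply Rdiv_lt_0_compat; [apply Rabs_pos_lt; lra|lra]. }
    destruct (HF_APX F 1 s b HG0 ltac:(lra) Hs Hb _ 1 Hd ltac:(lra)) as
      [y1 [y2 [th [Hy1 [Hy2 [Hd1 [Hd2 [Hth Hle]]]]]]]].
    destruct (persp F th y1) as [v1|] eqn:E1; [|destruct (persp F th y2); simpl in Hle; contradiction].
    destruct (persp F th y2) as [v2|] eqn:E2; [|simpl in Hle; contradiction].
    apply Hp in E1; auto. apply Hp in E2; auto. subst.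
    pose proof (Rabs_tri3 1 th s). rewrite (Rabs_minus_sym 1 th) in *. lra.
Qed.
Definition TriH (F : R -> ER) := forall s th, 0 < s -> 0 < th ->
  leE (F s) (addE (F th) (scalE s (F (th / s)))).

Lemma F_sym F : Gamma0 F -> TriH F -> forall s, 0 < s -> F s = scalE s (F (/ s)).
Proof.
  intros [Hn [Hc [_ H1]]] HT s Hs. apply leE_antisym.
  - pose proof (HT s 1 Hs ltac:(lra)) as H. rewrite H1, addE_0l in H.
    replace (1 / s) with (/ s) in H by (field; lra). exact H.
  - pose proof (HT (/ s) 1 ltac:(apply Rinv_0_lt_compat; lra) ltac:(lra)) as H.
    rewrite H1, addE_0l in H. replace (1 / / s) with s in H by (field; lra).
    eapply leE_trans; [apply scalE_mono; [lra|exact H]|].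
    rewrite scalE_scalE, Rinv_r, scalE_1 by lra. apply leE_refl.
Qed.

Lemma conv_lin F z1 z2 w2 : Gamma0 F -> 1 < z1 -> z1 < z2 -> F z2 = Fin w2 ->
  exists w1, F z1 = Fin w1 /\ w1 * (z2 - 1) <= w2 * (z1 - 1).
Proof.
  intros [Hn [Hc [_ H1]]] Hz1 Hz12 Hw2.
  set (l := (z1 - 1) / (z2 - 1)).
  assert (Hl : l * (z2 - 1) = z1 - 1) by (unfold l; field; lra).
  assert (Hl0 : 0 < l < 1).
  { unfold l. split; [apply Rdiv_lt_0_compat; lra|].
    apply Rmult_lt_reg_r with (z2 - 1); [lra|]. field_simplify; lra. }
  pose proof (Hc z2 1 l ltac:(lra) ltac:(lra) Hl0) as H.
  replace (l * z2 + (1 - l) * 1) with z1 in H by lra.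
  rewrite Hw2, H1 in H. simpl in H.
  destruct (F z1) as [w1|]; [|contradiction].
  exists w1. split; auto. simpl in H.
  assert (w1 * (z2 - 1) <= (l * w2 + (1 - l) * 0) * (z2 - 1)) by (apply Rmult_le_compat_r; lra).
  replace ((l * w2 + (1 - l) * 0) * (z2 - 1)) with (w2 * (l * (z2 - 1))) in H0 by ring.
  rewrite Hl in H0. exact H0.
Qed.

Lemma pow_step F y v : Gamma0 F -> TriH F -> 1 < y -> F y = Fin v ->
  forall n, exists w, F (y ^ S n) = Fin w /\ w * (y - 1) <= v * (y ^ S n - 1).
Proof.
  intros HG0 HT Hy Hv.
  pose proof (F_sym F HG0 HT y ltac:(lra)) as Hs. rewrite Hv in Hs.
  destruct (F (/ y)) as [u|] eqn:Hu; [|discriminate]. simpl in Hs. injection Hs as Hs.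
  induction n as [|n IH].
  - exists v. rewrite pow_1, Hv. split; auto. lra.
  - destruct IH as [w [Hw Hwle]].
    set (q := y ^ S n) in *.
    assert (Hq : 0 < q) by (unfold q; apply pow_lt; lra).
    assert (Hsq : y ^ S (S n) = y * q) by (unfold q; simpl; ring).
    pose proof (HT (y ^ S (S n)) q ltac:(rewrite Hsq; nra) Hq) as H.
    rewrite Hsq in *. replace (q / (y * q)) with (/ y) in H by (field; lra).
    rewrite Hw, Hu in H. simpl in H.
    destruct (F (y * q)) as [w'|]; [|contradiction].
    exists w'. split; auto. simpl in H.
    assert (w' * (y - 1) <= (w + y * q * u) * (y - 1)) by (apply Rmult_le_compat_r; lra).
    rewrite Hs in *. nra.
Qed.

Lemma bern y n : 1 <= y -> 1 + INR n * (y - 1) <= y ^ n.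
Proof.
  intros Hy. induction n as [|n IH].
  - simpl. lra.
  - rewrite S_INR. simpl.
    assert (0 <= INR n) by apply pos_INR.
    assert (y * (1 + INR n * (y - 1)) <= y * y ^ n) by (apply Rmult_le_compat_l; lra).
    assert (0 <= INR n * ((y - 1) * (y - 1))) by (apply Rmult_le_pos; nra).
    nra.
Qed.

Lemma big_pow y z : 1 < y -> exists n, z < y ^ S n.
Proof.
  intros Hy. destruct (INR_archimed (y - 1) z ltac:(lra)) as [n Hn].
  exists n. pose proof (bern y n ltac:(lra)).
  assert (0 < y ^ n) by (apply pow_lt; lra). simpl. nra.
Qed.

Lemma ratio F z1 z2 v1 w2 : Gamma0 F -> TriH F -> 1 < z1 -> z1 < z2 ->
  F z1 = Fin v1 -> F z2 = Fin w2 -> v1 * (z2 - 1) = w2 * (z1 - 1).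
Proof.
  intros HG0 HT Hz1 Hz12 Hv1 Hw2.
  destruct (conv_lin F z1 z2 w2 HG0 Hz1 Hz12 Hw2) as [w1 [Hw1 Hle1]].
  rewrite Hv1 in Hw1. injection Hw1 as <-.
  destruct (big_pow z1 z2 Hz1) as [n Hn].
  destruct (pow_step F z1 v1 HG0 HT Hz1 Hv1 n) as [w [Hw Hwle]].
  set (q := z1 ^ S n) in *.
  destruct (conv_lin F z2 q w HG0 ltac:(lra) Hn Hw) as [w2' [Hw2' Hle2]].
  rewrite Hw2 in Hw2'. injection Hw2' as <-.
  assert (A : w2 * (q - 1) * (z1 - 1) <= w * (z2 - 1) * (z1 - 1)) by
    (apply Rmult_le_compat_r; lra).
  assert (B : w * (z1 - 1) * (z2 - 1) <= v1 * (q - 1) * (z2 - 1)) by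
    (apply Rmult_le_compat_r; lra).
  assert (C : (q - 1) * (w2 * (z1 - 1)) <= (q - 1) * (v1 * (z2 - 1))) by nra.
  apply Rmult_le_reg_l in C; [|lra]. lra.
Qed.

Lemma fin_all F y v : Gamma0 F -> TriH F -> 1 < y -> F y = Fin v ->
  forall z, 1 < z -> exists w, F z = Fin w.
Proof.
  intros HG0 HT Hy Hv z Hz. destruct (big_pow y z Hy) as [n Hn].
  destruct (pow_step F y v HG0 HT Hy Hv n) as [w [Hw _]].
  destruct (conv_lin F z (y ^ S n) w HG0 Hz Hn Hw) as [w1 [Hw1 _]]. eauto.
Qed.

Lemma analysis F : Gamma0 F -> TriH F ->
  (forall th, 0 < th -> leE (F 0) (addE (F th) (recF F th))) ->
  (exists c, 0 <= c /\ forall s, 0 <= s -> F s = Fin (c * Rabs (s - 1))) \/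
  (forall s, 0 <= s -> F s = if Req_EM_T s 1 then Fin 0 else PInf).
Proof.
  intros HG0 HT HT0. pose proof HG0 as [Hn [Hc [_ H1]]].
  destruct (classic (exists y v, 1 < y /\ F y = Fin v)) as [[y [v [Hy Hv]]]|Hno].
  - left.
    destruct (fin_all F y v HG0 HT Hy Hv 2 ltac:(lra)) as [c Hc2].
    assert (Hgt : forall z, 1 < z -> F z = Fin (c * (z - 1))).
    { intros z Hz. destruct (fin_all F y v HG0 HT Hy Hv z Hz) as [w Hw].
      rewrite Hw. f_equal.
      destruct (Rtotal_order z 2) as [Hlt|[Heq|Hgt]].
      - pose proof (ratio F z 2 w c HG0 HT Hz Hlt Hw Hc2). lra.
      - subst z. rewrite Hc2 in Hw. injection Hw as <-. ring.
      - pose proof (ratio F 2 z c w HG0 HT ltac:(lra) Hgt Hc2 Hw). lra. }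
    assert (Hc0 : 0 <= c).
    { pose proof (Hn 2 ltac:(lra)) as H. rewrite Hc2 in H. exact H. }
    exists c. split; auto.
    assert (Hpos : forall s, 0 < s -> F s = Fin (c * Rabs (s - 1))).
    { intros s Hs. destruct (Rtotal_order s 1) as [Hlt|[Heq|Hgt1]].
      - rewrite (F_sym F HG0 HT s Hs).
        rewrite Hgt by (rewrite <- Rinv_1; apply Rinv_lt_contravar; lra).
        simpl. f_equal. rewrite Rabs_left by lra. field. lra.
      - subst s. rewrite H1, Rminus_diag, Rabs_R0. f_equal; ring.
      - rewrite Hgt by auto. rewrite Rabs_pos_eq by lra. auto. }
    intros s Hs. destruct (Rle_lt_or_eq_dec 0 s Hs) as [Hs'|Hs']; [auto|subst s].
    pose proof (HT0 (1/2) ltac:(lra)) as Hu.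
    assert (Hr : leE (recF F (1/2)) (Fin (c / 2))).
    { apply recF_le. intros a Ha. rewrite Hgt by nra. simpl. right. field. lra. }
    assert (Hh : F (1/2) = Fin (c / 2)).
    { rewrite Hpos by lra. rewrite Rabs_left by lra. f_equal. field. }
    rewrite Hh in Hu.
    pose proof (leE_trans _ _ _ Hu (addE_mono _ _ _ _ (leE_refl _) Hr)) as Hu2.
    simpl in Hu2.
    pose proof (Hc 0 1 (1/2) ltac:(lra) ltac:(lra) ltac:(lra)) as Hcv.
    replace (1 / 2 * 0 + (1 - 1 / 2) * 1) with (1/2) in Hcv by field.
    rewrite Hh, H1 in Hcv.
    destruct (F 0) as [u|]; [|contradiction]. simpl in Hcv, Hu2.
    f_equal. rewrite Rminus_0_l, Rabs_Ropp, Rabs_R1. lra.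
  - right.
    assert (Hinf : forall s, 0 < s -> s <> 1 -> F s = PInf).
    { intros s Hs Hs1. destruct (Rtotal_order s 1) as [Hlt|[Heq|Hgt1]]; [|lra|].
      - rewrite (F_sym F HG0 HT s Hs).
        destruct (F (/ s)) as [v|] eqn:E; auto. exfalso. apply Hno.
        exists (/ s), v. split; auto.
        rewrite <- Rinv_1; apply Rinv_lt_contravar; lra.
      - destruct (F s) as [v|] eqn:E; auto. exfalso. apply Hno. eauto. }
    intros s Hs. destruct (Req_EM_T s 1) as [->|Hs1]; auto.
    destruct (Rle_lt_or_eq_dec 0 s Hs) as [Hs'|Hs']; [auto|subst s].
    destruct (F 0) as [u|] eqn:E0; auto. exfalso.
    pose proof (Hc 0 1 (1/2) ltac:(lra) ltac:(lra) ltac:(lra)) as Hcv.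
    replace (1 / 2 * 0 + (1 - 1 / 2) * 1) with (1/2) in Hcv by field.
    rewrite E0, H1, (Hinf (1/2)) in Hcv by lra. simpl in Hcv. exact Hcv.
Qed.
Theorem mainTheorem5 :
  (forall F : R -> ER, Gamma0 F ->
     ((forall s, 0 <= s -> T1 F s = F s) <->
      ((exists c, 0 <= c /\ forall s, 0 <= s -> F s = Fin (c * Rabs (s - 1))) \/
       (forall s, 0 <= s -> F s = if Req_EM_T s 1 then Fin 0 else PInf)))) /\
  (forall G : R -> ER, Gamma0 G ->
     (is_metric_Rplus (HF G) <->
      exists c, 0 < c /\ forall r t, 0 <= r -> 0 <= t -> HF G r t = Fin (c * Rabs (r - t)))).
Proof.
  split; [|exact part2].
  intros F HG0. split.
  - intros Hfix. apply analysis; auto.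
    + intros s th Hs Hth. rewrite <- (Hfix s) by lra. unfold T1.
      eapply leE_trans; [apply HF_le; auto; lra|].
      eapply leE_trans; [apply (tildeH_le F 1 s th); auto|].
      rewrite (persp_pos F th 1) by lra. rewrite (persp_pos F th s) by auto.
      rewrite scalE_1. replace (th / 1) with th by field. apply leE_refl.
    + intros th Hth. rewrite <- (Hfix 0) by lra. unfold T1.
      eapply leE_trans; [apply HF_le; auto; lra|].
      eapply leE_trans; [apply (tildeH_le F 1 0 th); auto|].
      rewrite (persp_pos F th 1) by lra. rewrite persp_0.
      rewrite scalE_1. replace (th / 1) with th by field. apply leE_refl.
  - intros [[c [Hc H]]|H]; [apply (part1_lin F c)|apply part1_ind]; auto.
Qed.
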